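(* In the setting described in the context, writing $\alpha_V,\alpha_A,\boldsymbol\Delta_V,\boldsymbol\Delta_A,\mathbf{h}_{\mathbf{V}}=\mathbf{h}_{\mathbf{V},\tau},\mathbf{h}_{\mathbf{A}}=\mathbf{h}_{\mathbf{A},\tau}$ for quantities at time $\tau$, and $c_A=1-\eta_AK_P\alpha_V^2-\eta_A\|\boldsymbol\Delta_V\|_\mu^2$, $c_V=1-\eta_V(\alpha_A^2K_Q+1/T)-\eta_V\|\boldsymbol\Delta_A\|_\mu^2$, $$\|\boldsymbol\Delta_{\mathbf{A},\tau+1}\|_\mu^2=c_A^2\|\boldsymbol\Delta_{\mathbf{A}}\|_\mu^2-2\eta_Ac_A\langle\boldsymbol\Delta_{\mathbf{A}},\mathbf{h}_{\mathbf{A}}\rangle_\mu-\frac{\eta_A^2}{K_Q}\langle\mathbf{h}_{\mathbf{A}},\mathbf{Q}\rangle_\mu^2+\eta_A^2\|\mathbf{h}_{\mathbf{A}}\|_\mu^2,$$ $$\|\boldsymbol\Delta_{\mathbf{V},\tau+1}\|_\mu^2=c_V^2\|\boldsymbol\Delta_{\mathbf{V}}\|_\mu^2-2\eta_Vc_V\langle\boldsymbol\Delta_{\mathbf{V}},\mathbf{h}_{\mathbf{V}}\rangle_\mu-\frac{\eta_V^2}{K_P}\langle\mathbf{P},\mathbf{h}_{\mathbf{V}}\rangle_\mu^2+\eta_V^2\|\mathbf{h}_{\mathbf{V}}\|_\mu^2.$$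
   Context: $\boldsymbol\mu\in\mathbb{R}^N$ is a probability vector with positive entries; $\mathbf{P}\in\mathbb{R}^{N\times N}$ has nonnegative entries, columns summing to $1$, $\mathbf{P}\boldsymbol\mu=\boldsymbol\mu$; $\mathbf{Q}=(\mathbf{q}^{(1)},\dots,\mathbf{q}^{(N)})\in\mathbb{R}^{T\times N}$ has probability-vector columns. Data: $x_1,\dots,x_{T+1}$ i.i.d. with law $\boldsymbol\mu$, $x_o$ with $\Pr(x_o=n\mid x_{T+1}=k,x_1,\dots,x_T)=\sum_tq^{(k)}_tP_{n,x_t}$; $\mathbf{X}=(\mathbf{e}_{x_1},\dots,\mathbf{e}_{x_T})$; loss $l=\frac12\|\mathbf{e}_{x_o}-\mathbf{V}\mathbf{X}\mathbf{A}\mathbf{e}_{x_{T+1}}\|^2$. Preconditioned gradients: $\hat\nabla_{\mathbf{V}}l=(\mathbf{I}_N-\mathbf{1}\mathbf{1}^\top/N)(\nabla_{\mathbf{V}}l)\operatorname{diag}(1/\boldsymbol\mu)(\mathbf{I}_N-\boldsymbol\mu\boldsymbol\mu^\top/\|\boldsymbol\mu\|^2)$; $\hat\nabla_{\mathbf{A}}l$ has columns $\frac1{\mu_k}(\mathbf{I}_T-\mathbf{1}\mathbf{1}^\top/T)\nabla_{\mathbf{a}^{(k)}}l$. The iterate $(\mathbf{V}_\tau,\mathbf{A}_\tau)$ satisfies $\mathbf{1}^\top\mathbf{V}_\tau=\mathbf{1}^\top$, $\mathbf{1}^\top\mathbf{A}_\tau=\mathbf{1}^\top$, $\mathbf{V}_\tau\boldsymbol\mu=\boldsymbol\mu$,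 and $\mathbf{V}_{\tau+1}=\mathbf{V}_\tau-\eta_V(\mathbb{E}\hat\nabla_{\mathbf{V}}l+\mathbf{h}_{\mathbf{V},\tau})$, $\mathbf{A}_{\tau+1}=\mathbf{A}_\tau-\eta_A(\mathbb{E}\hat\nabla_{\mathbf{A}}l+\mathbf{h}_{\mathbf{A},\tau})$, where expectations are over the data at parameters $(\mathbf{V}_\tau,\mathbf{A}_\tau)$, and $\mathbf{h}_{\mathbf{V},\tau}=\hat\nabla^{(B)}_{\mathbf{V}}l-\mathbb{E}\hat\nabla_{\mathbf{V}}l$, $\mathbf{h}_{\mathbf{A},\tau}=\hat\nabla^{(B)}_{\mathbf{A}}l-\mathbb{E}\hat\nabla_{\mathbf{A}}l$ with $\hat\nabla^{(B)}$ the average of preconditioned per-sample gradients over $B$ fresh samples. $\langle\mathbf{M},\mathbf{M}'\rangle_\mu=\operatorname{Tr}(\mathbf{M}\operatorname{diag}(\boldsymbol\mu)\mathbf{M}'^\top)$, $\|\mathbf{M}\|_\mu^2=\langle\mathbf{M},\mathbf{M}\rangle_\mu$. $K_P=\|\mathbf{P}\|_\mu^2-\|\boldsymbol\mu\|^2>0$, $K_Q=\|\mathbf{Q}\|_\mu^2-1/T>0$; for any iterate, $\alpha_V=(\langle\mathbf{V},\mathbf{P}\rangle_\mu-\|\boldsymbol\mu\|^2)/K_P$, $\alpha_A=(\langle\mathbf{A},\mathbf{Q}\rangle_\mu-1/T)/K_Q$, $\boldsymbol\Delta_{\mathbf{V}}=\mathbf{V}-\alpha_V\mathbf{P}-(1-\alpha_V)\boldsymbol\mu\mathbf{1}^\top$,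 $\boldsymbol\Delta_{\mathbf{A}}=\mathbf{A}-\alpha_A\mathbf{Q}-(1-\alpha_A)\mathbf{1}\mathbf{1}^\top/T$; the subscript $\tau+1$ denotes these quantities at $(\mathbf{V}_{\tau+1},\mathbf{A}_{\tau+1})$. *)

(* Defs.v *)
From HB Require Import structures.
From mathcomp Require Import all_boot all_order all_algebra.
From mathcomp Require Import all_classical all_reals all_analysis.
Set Implicit Arguments. Unset Strict Implicit. Unset Printing Implicit Defensive.
Import Order.TTheory GRing.Theory Num.Theory.
Local Open Scope ring_scope.

Definition onesr (R : realType) (n : nat) : 'rV[R]_n := const_mx 1.
Definition ecol (R : realType) (n : nat) (k : 'I_n) : 'cV[R]_n :=
  \col_i (i == k)%:R.
Definition sqnorm (R : realType) (n : nat) (v : 'cV[R]_n) : R :=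
  \sum_i v i 0 ^+ 2.
Definition ip_mu (R : realType) (m n : nat) (mu : 'cV[R]_n)
  (M M' : 'M[R]_(m, n)) : R := \tr (M *m diag_mx mu^T *m M'^T).
Definition nrm_mu (R : realType) (m n : nat) (mu : 'cV[R]_n)
  (M : 'M[R]_(m, n)) : R := ip_mu mu M M.

(* a data sample: ((x_1,...,x_T), x_{T+1}, x_o) *)
Definition sample (N T : nat) := ({ffun 'I_T -> 'I_N} * 'I_N * 'I_N)%type.

Definition Xmat (R : realType) (N T : nat) (xs : {ffun 'I_T -> 'I_N})
  : 'M[R]_(N, T) := \matrix_(i, t) (i == xs t)%:R.

(* probability of a sample: x_1..x_{T+1} iid mu, and
   Pr(x_o = n | x_{T+1} = k, x_1..x_T) = sum_t q^(k)_t P_{n, x_t} *)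
Definition prob (R : realType) (N T : nat) (mu : 'cV[R]_N)
  (P : 'M[R]_N) (Q : 'M[R]_(T, N)) (s : sample N T) : R :=
  let: (xs, xq, xo) := s in
  (\prod_t mu (xs t) 0) * mu xq 0 * \sum_t Q t xq * P xo (xs t).

Definition loss (R : realType) (N T : nat) (V : 'M[R]_N) (A : 'M[R]_(T, N))
  (s : sample N T) : R :=
  let: (xs, xq, xo) := s in
  2^-1 * sqnorm (ecol R xo - V *m Xmat R xs *m A *m ecol R xq).

Definition gradV (R : realType) (N T : nat) (V : 'M[R]_N) (A : 'M[R]_(T, N))
  (s : sample N T) : 'M[R]_N :=
  \matrix_(i, j) derive1 (fun r : R => loss (V + r *: delta_mx i j) A s) 0.
Definition gradA (R : realType) (N T : nat) (V : 'M[R]_N) (A : 'M[R]_(T, N))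
  (s : sample N T) : 'M[R]_(T, N) :=
  \matrix_(t, k) derive1 (fun r : R => loss V (A + r *: delta_mx t k) s) 0.

Definition pgradV (R : realType) (N T : nat) (mu : 'cV[R]_N) (V : 'M[R]_N)
  (A : 'M[R]_(T, N)) (s : sample N T) : 'M[R]_N :=
  (1%:M - const_mx (N%:R^-1)) *m gradV V A s
    *m diag_mx (\row_i (mu i 0)^-1)
    *m (1%:M - (sqnorm mu)^-1 *: (mu *m mu^T)).
Definition pgradA (R : realType) (N T : nat) (mu : 'cV[R]_N) (V : 'M[R]_N)
  (A : 'M[R]_(T, N)) (s : sample N T) : 'M[R]_(T, N) :=
  \matrix_(t, k) ((mu k 0)^-1 *:
     ((1%:M - const_mx (T%:R^-1)) *m col k (gradA V A s))) t 0.

Definition Edata (R : realType) (N T m n : nat) (mu : 'cV[R]_N)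
  (P : 'M[R]_N) (Q : 'M[R]_(T, N)) (f : sample N T -> 'M[R]_(m, n))
  : 'M[R]_(m, n) := \sum_(s : sample N T) prob mu P Q s *: f s.

Definition batch_avg (R : realType) (N T m n B : nat) (S : 'I_B -> sample N T)
  (f : sample N T -> 'M[R]_(m, n)) : 'M[R]_(m, n) :=
  B%:R^-1 *: \sum_(b < B) f (S b).

Definition K_P (R : realType) (N : nat) (mu : 'cV[R]_N) (P : 'M[R]_N) : R :=
  nrm_mu mu P - sqnorm mu.
Definition K_Q (R : realType) (N T : nat) (mu : 'cV[R]_N) (Q : 'M[R]_(T, N)) : R :=
  nrm_mu mu Q - T%:R^-1.

Definition alphaV (R : realType) (N : nat) (mu : 'cV[R]_N) (P V : 'M[R]_N) : R :=
  (ip_mu mu V P - sqnorm mu) / K_P mu P.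
Definition alphaA (R : realType) (N T : nat) (mu : 'cV[R]_N)
  (Q A : 'M[R]_(T, N)) : R :=
  (ip_mu mu A Q - T%:R^-1) / K_Q mu Q.
Definition DeltaV (R : realType) (N : nat) (mu : 'cV[R]_N) (P V : 'M[R]_N)
  : 'M[R]_N :=
  V - alphaV mu P V *: P - (1 - alphaV mu P V) *: (mu *m onesr R N).
Definition DeltaA (R : realType) (N T : nat) (mu : 'cV[R]_N)
  (Q A : 'M[R]_(T, N)) : 'M[R]_(T, N) :=
  A - alphaA mu Q A *: Q - (1 - alphaA mu Q A) *: const_mx (T%:R^-1).

(* Main.v *)
Require Import Defs.
From HB Require Import structures.
From mathcomp Require Import all_boot all_order all_algebra.
From mathcomp Require Import all_classical all_reals all_analysis.
From mathcomp Require Import ring lra.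
Import Order.TTheory GRing.Theory Num.Theory.
Local Open Scope ring_scope.

Set Implicit Arguments. Unset Strict Implicit. Unset Printing Implicit Defensive.


Lemma deriv_quad (R : realType) (a b c : R) :
  derive1 (fun r : R => a + r * b + r * r * c) 0 = b.
Proof.
have -> : (fun r : R => a + r * b + r * r * c) = horner (a%:P + b *: 'X + c *: 'X^2).
  apply/funext => r; rewrite !hornerE /=; ring.
rewrite derive1E (@derive_val _ _ _ _ _ _ _ (is_derive_poly _ _)).
by rewrite !derivD derivC !derivZ derivX derivXn !hornerE /=; ring.
Qed.

Lemma deriv_sq (R : realType) n (u w : 'cV[R]_n) :
  derive1 (fun r : R => 2^-1 * sqnorm (u - r *: w)) 0 = - \sum_i u i 0 * w i 0.
Proof.
rewrite -[RHS](deriv_quad (2^-1 * \sum_i u i 0 ^+ 2) _ (2^-1 * \sum_i w i 0 ^+ 2)).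
congr derive1; apply/funext => r; rewrite /sqnorm.
rewrite -sumrN !mulr_sumr -!big_split /=.
apply: eq_bigr => i _; by rewrite !mxE; field.
Qed.

Lemma sum_delta (R : realType) N (x : 'I_N) (G : 'I_N -> R) :
  \sum_a (x == a)%:R * G a = G x.
Proof.
rewrite (bigD1 x) //= eqxx mul1r big1 ?addr0 // => a hax.
by rewrite eq_sym (negbTE hax) mul0r.
Qed.

Lemma prod_if1 (R : realType) T (s : 'I_T) (G : 'I_T -> R) :
  \prod_i (if i == s then G i else 1) = G s.
Proof. by rewrite -big_mkcond big_pred1_eq. Qed.

Lemma prod3 (R : realType) N T (mu : 'cV[R]_N) (xs : {ffun 'I_T -> 'I_N}) s t a b :
  \prod_i (mu (xs i) 0 * (if i == s then (xs i == a)%:R else 1)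
                       * (if i == t then (xs i == b)%:R else 1)) =
  (\prod_i mu (xs i) 0) * (xs s == a)%:R * (xs t == b)%:R.
Proof. by rewrite !big_split /= !prod_if1. Qed.

Lemma L2 (R : realType) N T (mu : 'cV[R]_N) (F : 'I_N -> 'I_N -> R) (s t : 'I_T) :
  \sum_i mu i 0 = 1 ->
  \sum_(xs : {ffun 'I_T -> 'I_N}) (\prod_i mu (xs i) 0) * F (xs s) (xs t) =
  if s == t then \sum_a mu a 0 * F a a
  else \sum_a \sum_b mu a 0 * mu b 0 * F a b.
Proof.
move=> hs.
transitivity (\sum_a \sum_b F a b * \sum_(xs : {ffun 'I_T -> 'I_N})
   \prod_i (mu (xs i) 0 * (if i == s then (xs i == a)%:R else 1)
                       * (if i == t then (xs i == b)%:R else 1))).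
  transitivity (\sum_(xs : {ffun 'I_T -> 'I_N}) \sum_a \sum_b F a b *
     ((\prod_i mu (xs i) 0) * (xs s == a)%:R * (xs t == b)%:R)).
    apply: eq_bigr => xs _.
    rewrite (eq_bigr (fun a => (xs s == a)%:R * \sum_b ((xs t == b)%:R * ((\prod_i mu (xs i) 0) * F a b)))); last first.
      by move=> a _; rewrite mulr_sumr; apply: eq_bigr => b _; ring.
    by rewrite sum_delta sum_delta.
  rewrite exchange_big; apply: eq_bigr => a _ /=.
  rewrite exchange_big; apply: eq_bigr => b _ /=.
  rewrite mulr_sumr; apply: eq_bigr => xs _.
  by rewrite prod3.
have hW : forall (s t : 'I_T) a b, \sum_(xs : {ffun 'I_T -> 'I_N})
   \prod_i (mu (xs i) 0 * (if i == s then (xs i == a)%:R else 1)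
                       * (if i == t then (xs i == b)%:R else 1)) =
   \prod_i \sum_j (mu j 0 * (if i == s then (j == a)%:R else 1)
                       * (if i == t then (j == b)%:R else 1)).
  by move=> s' t' a b; rewrite (bigA_distr_bigA (fun i j => (mu j 0 * (if i == s' then (j == a)%:R else 1)
                       * (if i == t' then (j == b)%:R else 1)))).
have hrest : forall (s t : 'I_T) a b (i : 'I_T), i != s -> i != t ->
   \sum_j (mu j 0 * (if i == s then (j == a)%:R else 1)
                       * (if i == t then (j == b)%:R else 1)) = 1.
  move=> s' t' a b i his hit; rewrite (negbTE his) (negbTE hit).
  by under eq_bigr do rewrite !mulr1.
case: eqP => [<-|/eqP hst].
  apply: eq_bigr => a _.
  rewrite (eq_bigr (fun b => (a == b)%:R * (F a b * mu a 0))); first by rewrite sum_delta mulrC.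
  move=> b _; rewrite hW (bigD1 s) //= [\prod_(i | i != s) _]big1 ?mulr1; last first.
    by move=> i his; rewrite hrest.
  rewrite eqxx (eq_bigr (fun j => (a == j)%:R * (mu j 0 * (j == b)%:R))); last first.
    by move=> j _; rewrite eq_sym; ring.
  by rewrite sum_delta; ring.
apply: eq_bigr => a _; apply: eq_bigr => b _.
rewrite hW (bigD1 s) //= (bigD1 t) //=; last by rewrite eq_sym.
rewrite [\prod_(i | _ && _) _]big1 ?mulr1; last first.
  by move=> i /andP [his hit]; rewrite hrest.
rewrite eqxx (negbTE hst) eq_sym (negbTE hst) eqxx.
rewrite (eq_bigr (fun j => (a == j)%:R * mu j 0)); last first.
  by move=> j _; rewrite eq_sym; ring.
rewrite sum_delta.
rewrite (eq_bigr (fun j => (b == j)%:R * mu j 0)); last first.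
  by move=> j _; rewrite eq_sym; ring.
by rewrite sum_delta; ring.
Qed.

Lemma sum_sample (R : realType) N T (F : sample N T -> R) :
  \sum_s F s = \sum_xs \sum_xq \sum_xo F (xs, xq, xo).
Proof.
symmetry; rewrite pair_bigA /=.
rewrite (pair_bigA _ (fun (p : {ffun 'I_T -> 'I_N} * 'I_N) xo => F (p.1, p.2, xo))) /=.
by apply: eq_bigr => [[[xs xq] xo]] _.
Qed.

Lemma ip_sum (R : realType) m n (mu : 'cV[R]_n) (M M' : 'M[R]_(m, n)) :
  ip_mu mu M M' = \sum_i \sum_k M i k * mu k 0 * M' i k.
Proof.
rewrite /ip_mu /mxtrace; apply: eq_bigr => i _.
rewrite mxE; apply: eq_bigr => k _.
by rewrite mul_mx_diag !mxE.
Qed.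

Lemma ipDl (R : realType) m n (mu : 'cV[R]_n) (M1 M2 M' : 'M[R]_(m, n)) :
  ip_mu mu (M1 + M2) M' = ip_mu mu M1 M' + ip_mu mu M2 M'.
Proof.
rewrite !ip_sum -big_split; apply: eq_bigr => i _.
rewrite -big_split; apply: eq_bigr => k _; rewrite !mxE /=; ring.
Qed.
Lemma ipDr (R : realType) m n (mu : 'cV[R]_n) (M1 M2 M' : 'M[R]_(m, n)) :
  ip_mu mu M' (M1 + M2) = ip_mu mu M' M1 + ip_mu mu M' M2.
Proof.
rewrite !ip_sum -big_split; apply: eq_bigr => i _.
rewrite -big_split; apply: eq_bigr => k _; rewrite !mxE /=; ring.
Qed.
Lemma ipNl (R : realType) m n (mu : 'cV[R]_n) (M M' : 'M[R]_(m, n)) :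
  ip_mu mu (- M) M' = - ip_mu mu M M'.
Proof.
rewrite !ip_sum -sumrN; apply: eq_bigr => i _.
rewrite -sumrN; apply: eq_bigr => k _; rewrite !mxE; ring.
Qed.
Lemma ipNr (R : realType) m n (mu : 'cV[R]_n) (M M' : 'M[R]_(m, n)) :
  ip_mu mu M' (- M) = - ip_mu mu M' M.
Proof.
rewrite !ip_sum -sumrN; apply: eq_bigr => i _.
rewrite -sumrN; apply: eq_bigr => k _; rewrite !mxE; ring.
Qed.
Lemma ipZl (R : realType) m n (mu : 'cV[R]_n) (c : R) (M M' : 'M[R]_(m, n)) :
  ip_mu mu (c *: M) M' = c * ip_mu mu M M'.
Proof.
rewrite !ip_sum mulr_sumr; apply: eq_bigr => i _.
rewrite mulr_sumr; apply: eq_bigr => k _; rewrite !mxE; ring.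
Qed.
Lemma ipZr (R : realType) m n (mu : 'cV[R]_n) (c : R) (M M' : 'M[R]_(m, n)) :
  ip_mu mu M' (c *: M) = c * ip_mu mu M' M.
Proof.
rewrite !ip_sum mulr_sumr; apply: eq_bigr => i _.
rewrite mulr_sumr; apply: eq_bigr => k _; rewrite !mxE; ring.
Qed.
Lemma ipC (R : realType) m n (mu : 'cV[R]_n) (M M' : 'M[R]_(m, n)) :
  ip_mu mu M M' = ip_mu mu M' M.
Proof.
rewrite !ip_sum; apply: eq_bigr => i _; apply: eq_bigr => k _; ring.
Qed.

Lemma ecolE (R : realType) n (k : 'I_n) : ecol R k = delta_mx k 0.
Proof. by apply/matrixP => i j; rewrite !mxE (ord1 j) eqxx andbT. Qed.

Definition yv (R : realType) N T (A : 'M[R]_(T, N)) (xs : {ffun 'I_T -> 'I_N}) xq : 'cV[R]_N :=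
  Xmat R xs *m A *m ecol R xq.

Lemma yv_entry (R : realType) N T (A : 'M[R]_(T, N)) xs xq j :
  yv A xs xq j 0 = \sum_t (j == xs t)%:R * A t xq.
Proof.
rewrite /yv ecolE -mulmxA -colE mxE; apply: eq_bigr => t _; by rewrite !mxE.
Qed.

Lemma gradV_E (R : realType) N T (V : 'M[R]_N) (A : 'M[R]_(T, N)) xs xq xo i j :
  gradV V A (xs, xq, xo) i j =
  ((V *m yv A xs xq) i 0 - (i == xo)%:R) * yv A xs xq j 0.
Proof.
rewrite /gradV mxE.
have -> : (fun r : R => loss (V + r *: delta_mx i j) A (xs, xq, xo)) =
  (fun r => 2^-1 * sqnorm ((ecol R xo - V *m yv A xs xq) - r *: (delta_mx i j *m yv A xs xq))).
  apply/funext => r; rewrite /loss /yv -!mulmxA mulmxDl -scalemxAl; congr (_ * sqnorm _).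
  by rewrite opprD addrA.
rewrite deriv_sq -sumrN.
rewrite (eq_bigr (fun l => (i == l)%:R * (((V *m yv A xs xq) i 0 - (i == xo)%:R) * yv A xs xq j 0))).
  by rewrite sum_delta.
move=> l _.
have hw : (delta_mx i j *m yv A xs xq) l 0 = (l == i)%:R * yv A xs xq j 0.
  rewrite mxE (bigD1 j) //= big1 ?addr0; first by rewrite mxE eqxx andbT.
  by move=> a /negbTE ha; rewrite mxE ha andbF mul0r.
have hu : (ecol R xo - V *m yv A xs xq) l 0 = (l == xo)%:R - (V *m yv A xs xq) l 0.
  by rewrite !mxE.
rewrite hu hw; have [->|hne] := eqVneq i l; last first.
  by rewrite /= !mul0r mulr0 oppr0.
rewrite /=; ring.
Qed.

Lemma w_entry (R : realType) N T (V : 'M[R]_N) (xs : {ffun 'I_T -> 'I_N}) (t : 'I_T) (k xq l : 'I_N) :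
  (V *m (Xmat R xs *m (delta_mx t k *m ecol R xq))) l 0 = (xq == k)%:R * V l (xs t).
Proof.
rewrite ecolE mul_delta_mx_cond [k == xq]eq_sym; case: eqP => _ /=.
  rewrite mulr1n -colE mul1r mxE (bigD1 (xs t)) //= big1 ?addr0; first by rewrite !mxE eqxx mulr1.
  by move=> a /negbTE ha; rewrite !mxE ha mulr0.
by rewrite mulr0n mulmx0 mulmx0 mxE mul0r.
Qed.

Lemma gradA_E (R : realType) N T (V : 'M[R]_N) (A : 'M[R]_(T, N)) xs xq xo t k :
  gradA V A (xs, xq, xo) t k =
  (xq == k)%:R * \sum_l ((V *m yv A xs xq) l 0 - (l == xo)%:R) * V l (xs t).
Proof.
rewrite /gradA mxE.
have -> : (fun r : R => loss V (A + r *: delta_mx t k) (xs, xq, xo)) =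
  (fun r => 2^-1 * sqnorm ((ecol R xo - V *m yv A xs xq) -
      r *: (V *m (Xmat R xs *m (delta_mx t k *m ecol R xq))))).
  apply/funext => r; rewrite /loss /yv; congr (_ * sqnorm _).
  rewrite !mulmxDr !mulmxDl -!scalemxAr -!scalemxAl !mulmxA.
  by rewrite opprD addrA.
rewrite deriv_sq -sumrN mulr_sumr; apply: eq_bigr => l _.
rewrite w_entry.
have hu : (ecol R xo - V *m yv A xs xq) l 0 = (l == xo)%:R - (V *m yv A xs xq) l 0.
  by rewrite !mxE.
rewrite hu; ring.
Qed.

Lemma sumrB (R : realType) (I : finType) (F G : I -> R) :
  \sum_i (F i - G i) = \sum_i F i - \sum_i G i.
Proof. by rewrite big_split /= sumrN. Qed.

Lemma Vy_entry (R : realType) N T (V : 'M[R]_N) (A : 'M[R]_(T, N)) xs xq l :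
  (V *m yv A xs xq) l 0 = \sum_s V l (xs s) * A s xq.
Proof.
rewrite mxE; under eq_bigr do rewrite yv_entry mulr_sumr.
rewrite exchange_big /=; apply: eq_bigr => s _.
rewrite (eq_bigr (fun j => (xs s == j)%:R * (V l j * A s xq))); first by rewrite sum_delta.
by move=> j _; rewrite eq_sym; ring.
Qed.

Definition F1 (R : realType) N (V : 'M[R]_N) (a b : 'I_N) := \sum_l V l a * V l b.
Definition F2 (R : realType) N (P V : 'M[R]_N) (a b : 'I_N) := \sum_o P o a * V o b.

Lemma sum_xo (R : realType) N T (P V : 'M[R]_N) (Q : 'M[R]_(T, N)) (xs : {ffun 'I_T -> 'I_N}) k (C : R) b :
  (forall a, \sum_o P o a = 1) -> \sum_t Q t k = 1 ->
  \sum_xo (\sum_t Q t k * P xo (xs t)) * (C - V xo b) =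
  C - \sum_t Q t k * F2 P V (xs t) b.
Proof.
move=> hP hQ.
transitivity (\sum_t (Q t k * C * \sum_xo P xo (xs t) - Q t k * F2 P V (xs t) b)).
  rewrite (eq_bigr (fun xo => \sum_t (Q t k * C * P xo (xs t) - Q t k * (P xo (xs t) * V xo b)))); last first.
    by move=> xo _; rewrite mulr_suml; apply: eq_bigr => t _; ring.
  rewrite exchange_big /=; apply: eq_bigr => t _.
  by rewrite sumrB /F2 !mulr_sumr.
by rewrite sumrB; under eq_bigr do rewrite hP mulr1; rewrite -mulr_suml hQ mul1r.
Qed.

Lemma EA_xs (R : realType) N T (mu : 'cV[R]_N) (P V : 'M[R]_N) (Q A : 'M[R]_(T, N))
  (xs : {ffun 'I_T -> 'I_N}) (t' : 'I_T) (k : 'I_N) :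
  (forall a, \sum_o P o a = 1) -> (forall k, \sum_t Q t k = 1) ->
  \sum_xq \sum_xo prob mu P Q (xs, xq, xo) * gradA V A (xs, xq, xo) t' k =
  mu k 0 * ((\prod_i mu (xs i) 0) *
     (\sum_s A s k * F1 V (xs s) (xs t') - \sum_s Q s k * F2 P V (xs s) (xs t'))).
Proof.
move=> hP hQ.
rewrite (bigD1 k) //= [\sum_(xq | xq != k) _]big1 ?addr0; last first.
  move=> xq hxq; apply: big1 => xo _.
  by rewrite gradA_E (negbTE hxq) mul0r mulr0.
under eq_bigr => xo _ do rewrite gradA_E eqxx mul1r.
have hC : forall xo, \sum_l ((V *m yv A xs k) l 0 - (l == xo)%:R) * V l (xs t') =
   \sum_s A s k * F1 V (xs s) (xs t') - V xo (xs t').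
  move=> xo; rewrite (eq_bigr (fun l => (V *m yv A xs k) l 0 * V l (xs t') - (xo == l)%:R * V l (xs t'))); last first.
    by move=> l _; rewrite eq_sym; ring.
  rewrite sumrB sum_delta; congr (_ - _).
  under eq_bigr do rewrite Vy_entry mulr_suml.
  rewrite exchange_big /=; apply: eq_bigr => s _.
  by rewrite /F1 mulr_sumr; apply: eq_bigr => l _; ring.
under eq_bigr => xo _ do rewrite hC.
rewrite /prob.
rewrite (eq_bigr (fun xo => ((\prod_t mu (xs t) 0) * mu k 0) * ((\sum_t Q t k * P xo (xs t)) *
    (\sum_s A s k * F1 V (xs s) (xs t') - V xo (xs t'))))); last by move=> xo _; ring.
rewrite -mulr_sumr sum_xo //; ring.
Qed.

Lemma Mmu_entry (R : realType) N (M : 'M[R]_N) (mu : 'cV[R]_N) o :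
  M *m mu = mu -> \sum_a M o a * mu a 0 = mu o 0.
Proof. by move=> h; have := congr1 (fun X : 'cV[R]_N => X o 0) h; rewrite mxE. Qed.

Lemma m_val (R : realType) N (M1 M2 : 'M[R]_N) (mu : 'cV[R]_N) :
  M1 *m mu = mu -> M2 *m mu = mu ->
  \sum_a \sum_b mu a 0 * mu b 0 * \sum_o M1 o a * M2 o b = sqnorm mu.
Proof.
move=> h1 h2; rewrite /sqnorm.
transitivity (\sum_o (\sum_a M1 o a * mu a 0) * (\sum_b M2 o b * mu b 0)); last first.
  by apply: eq_bigr => o _; rewrite !Mmu_entry // expr2.
under eq_bigr => a _ do under eq_bigr => b _ do rewrite mulr_sumr.
under eq_bigr => a _ do rewrite exchange_big /=.
rewrite exchange_big /=; apply: eq_bigr => o _.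
rewrite mulr_suml; apply: eq_bigr => a _.
by rewrite mulr_sumr; apply: eq_bigr => b _; ring.
Qed.

Lemma d_val (R : realType) N (M1 M2 : 'M[R]_N) (mu : 'cV[R]_N) :
  \sum_a mu a 0 * \sum_o M1 o a * M2 o a = ip_mu mu M2 M1.
Proof.
rewrite ip_sum exchange_big /=; apply: eq_bigr => a _.
by rewrite mulr_sumr; apply: eq_bigr => o _; ring.
Qed.

Lemma sum_if (R : realType) T (c : 'I_T -> R) (t' : 'I_T) (d m : R) :
  \sum_s c s * (if s == t' then d else m) = m * \sum_s c s + c t' * (d - m).
Proof.
rewrite (eq_bigr (fun s => m * c s + (t' == s)%:R * (c s * (d - m)))); last first.
  by move=> s _; rewrite eq_sym; case: eqP => _ /=; ring.
by rewrite big_split /= sum_delta mulr_sumr.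
Qed.

Lemma EA_full (R : realType) N T (mu : 'cV[R]_N) (P V : 'M[R]_N) (Q A : 'M[R]_(T, N))
  (t' : 'I_T) (k : 'I_N) :
  \sum_i mu i 0 = 1 ->
  (forall a, \sum_o P o a = 1) -> (forall k, \sum_t Q t k = 1) -> (forall k, \sum_t A t k = 1) ->
  P *m mu = mu -> V *m mu = mu ->
  \sum_s prob mu P Q s * gradA V A s t' k =
  mu k 0 * ((nrm_mu mu V - sqnorm mu) * A t' k - (ip_mu mu V P - sqnorm mu) * Q t' k).
Proof.
move=> hs hP hQ hA hPmu hVmu.
rewrite sum_sample; under eq_bigr do rewrite EA_xs //.
rewrite -mulr_sumr; congr (_ * _).
under eq_bigr do rewrite mulrBr !mulr_sumr.
transitivity (\sum_s A s k * (\sum_(xs : {ffun 'I_T -> 'I_N}) (\prod_i mu (xs i) 0) * F1 V (xs s) (xs t'))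
  - \sum_s Q s k * (\sum_(xs : {ffun 'I_T -> 'I_N}) (\prod_i mu (xs i) 0) * F2 P V (xs s) (xs t'))).
  rewrite sumrB; congr (_ - _); rewrite exchange_big /=; apply: eq_bigr => s _;
  rewrite mulr_sumr; apply: eq_bigr => xs _; ring.
under eq_bigr do rewrite L2 //.
under [X in _ - X]eq_bigr do rewrite L2 //.
rewrite !sum_if hA hQ /F1 /F2 !d_val !m_val //.
rewrite (ipC mu V P); ring.
Qed.

Definition G1 (R : realType) N (M : 'M[R]_N) (i j a b : 'I_N) : R := M i a * (j == b)%:R.

Lemma sumS1 (R : realType) N T (P : 'M[R]_N) (Q : 'M[R]_(T, N)) (xs : {ffun 'I_T -> 'I_N}) xq :
  (forall a, \sum_o P o a = 1) -> \sum_t Q t xq = 1 ->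
  \sum_xo \sum_t Q t xq * P xo (xs t) = 1.
Proof.
move=> hP hQ; rewrite exchange_big /= -hQ; apply: eq_bigr => t _.
by rewrite -mulr_sumr hP mulr1.
Qed.

Lemma prod_sums (R : realType) T (f g : 'I_T -> R) :
  (\sum_s f s) * (\sum_s' g s') = \sum_s \sum_s' f s * g s'.
Proof. by rewrite mulr_suml; apply: eq_bigr => s _; rewrite mulr_sumr. Qed.

Lemma EV_xo (R : realType) N T (mu : 'cV[R]_N) (P V : 'M[R]_N) (Q A : 'M[R]_(T, N))
  (xs : {ffun 'I_T -> 'I_N}) (xq i j : 'I_N) :
  (forall a, \sum_o P o a = 1) -> (forall k, \sum_t Q t k = 1) ->
  \sum_(xo : 'I_N) prob mu P Q (xs, xq, xo) * gradV V A (xs, xq, xo) i j =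
  mu xq 0 * ((\prod_t mu (xs t) 0) *
    (\sum_s \sum_s' A s xq * A s' xq * G1 V i j (xs s) (xs s')
     - \sum_s \sum_s' Q s xq * A s' xq * G1 P i j (xs s) (xs s'))).
Proof.
move=> hP hQ.
set y := yv A xs xq j 0.
set c := (V *m yv A xs xq) i 0.
rewrite (eq_bigr (fun xo : 'I_N => (mu xq 0 * (\prod_t mu (xs t) 0)) * (y * (c * (\sum_t Q t xq * P xo (xs t))
     - (i == xo)%:R * (\sum_t Q t xq * P xo (xs t)))))); last first.
  by move=> xo _; rewrite gradV_E /prob -/y -/c; ring.
rewrite -mulr_sumr -mulrA; congr (_ * (_ * _)).
rewrite -mulr_sumr sumrB -mulr_sumr sumS1 // mulr1 sum_delta.
rewrite /y /c yv_entry Vy_entry mulrBr !prod_sums.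
by congr (_ - _); rewrite exchange_big /=; apply: eq_bigr => s _; apply: eq_bigr => s' _; rewrite /G1; ring.
Qed.

Lemma L3 (R : realType) N T (mu : 'cV[R]_N) (G : 'I_N -> 'I_N -> R) (al be : 'I_T -> R) :
  \sum_i mu i 0 = 1 ->
  \sum_(xs : {ffun 'I_T -> 'I_N}) (\prod_i mu (xs i) 0) *
     (\sum_s \sum_s' al s * be s' * G (xs s) (xs s')) =
  (\sum_s al s) * (\sum_s be s) * (\sum_a \sum_b mu a 0 * mu b 0 * G a b)
  + (\sum_s al s * be s) * (\sum_a mu a 0 * G a a - \sum_a \sum_b mu a 0 * mu b 0 * G a b).
Proof.
move=> hs.
transitivity (\sum_s \sum_s' al s * be s' * (\sum_(xs : {ffun 'I_T -> 'I_N}) (\prod_i mu (xs i) 0) * G (xs s) (xs s'))).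
  under eq_bigr do rewrite mulr_sumr.
  rewrite exchange_big /=; apply: eq_bigr => s _.
  under eq_bigr do rewrite mulr_sumr.
  rewrite exchange_big /=; apply: eq_bigr => s' _.
  by rewrite mulr_sumr; apply: eq_bigr => xs _; ring.
under eq_bigr => s _ do under eq_bigr => s' _ do rewrite L2 // [s == s']eq_sym.
set d := \sum_a mu a 0 * G a a.
set m := \sum_a \sum_b mu a 0 * mu b 0 * G a b.
under eq_bigr => s _ do rewrite (sum_if (fun s' => al s * be s') s d m).
rewrite big_split /= -mulr_sumr -mulr_suml prod_sums; ring.
Qed.

Lemma G1_d (R : realType) N (M : 'M[R]_N) (mu : 'cV[R]_N) i j :
  \sum_a mu a 0 * G1 M i j a a = mu j 0 * M i j.
Proof.
rewrite (eq_bigr (fun a => (j == a)%:R * (mu a 0 * M i a))); first by rewrite sum_delta.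
by move=> a _; rewrite /G1; ring.
Qed.

Lemma G1_m (R : realType) N (M : 'M[R]_N) (mu : 'cV[R]_N) i j :
  M *m mu = mu -> \sum_a \sum_b mu a 0 * mu b 0 * G1 M i j a b = mu i 0 * mu j 0.
Proof.
move=> h; rewrite -(Mmu_entry i h) mulr_suml; apply: eq_bigr => a _.
rewrite (eq_bigr (fun b => (j == b)%:R * (mu a 0 * mu b 0 * M i a))); first by rewrite sum_delta; ring.
by move=> b _; rewrite /G1; ring.
Qed.

Lemma sum_mulrB (R : realType) (I : finType) (f g h : I -> R) :
  \sum_x f x * (g x - h x) = \sum_x f x * g x - \sum_x f x * h x.
Proof. by rewrite -sumrB; apply: eq_bigr => x _; rewrite mulrBr. Qed.

Lemma EV_full (R : realType) N T (mu : 'cV[R]_N) (P V : 'M[R]_N) (Q A : 'M[R]_(T, N))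
  (i j : 'I_N) :
  \sum_i mu i 0 = 1 ->
  (forall a, \sum_o P o a = 1) -> (forall k, \sum_t Q t k = 1) -> (forall k, \sum_t A t k = 1) ->
  P *m mu = mu -> V *m mu = mu ->
  \sum_s prob mu P Q s * gradV V A s i j =
  nrm_mu mu A * (V i j * mu j 0 - mu i 0 * mu j 0)
  - ip_mu mu A Q * (P i j * mu j 0 - mu i 0 * mu j 0).
Proof.
move=> hs hP hQ hA hPmu hVmu.
rewrite sum_sample.
under eq_bigr => xs _ do under eq_bigr => xq _ do rewrite EV_xo //.
rewrite exchange_big /=.
under eq_bigr => xq _ do rewrite -mulr_sumr sum_mulrB !L3 // !G1_d !G1_m // hA hQ.
have hn : forall B C : 'M[R]_(T, N), ip_mu mu B C = \sum_q mu q 0 * \sum_s C s q * B s q.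
  move=> B C; rewrite ip_sum exchange_big /=; apply: eq_bigr => q _.
  by rewrite mulr_sumr; apply: eq_bigr => s _; ring.
rewrite /nrm_mu !hn !mulr_suml -sumrB; apply: eq_bigr => q _; ring.
Qed.

Lemma Edata_entry (R : realType) N T m n (mu : 'cV[R]_N) (P : 'M[R]_N) (Q : 'M[R]_(T, N))
  (f : sample N T -> 'M[R]_(m, n)) i j :
  Edata mu P Q f i j = \sum_s prob mu P Q s * f s i j.
Proof. by rewrite /Edata summxE; apply: eq_bigr => s _; rewrite mxE. Qed.

Lemma EgA_eq (R : realType) N T (mu : 'cV[R]_N) (P V : 'M[R]_N) (Q A : 'M[R]_(T, N)) :
  (forall i, 0 < mu i 0) -> \sum_i mu i 0 = 1 ->
  (forall a, \sum_o P o a = 1) -> (forall k, \sum_t Q t k = 1) -> (forall k, \sum_t A t k = 1) ->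
  P *m mu = mu -> V *m mu = mu ->
  Edata mu P Q (pgradA mu V A) =
  (nrm_mu mu V - sqnorm mu) *: (A - const_mx (T%:R^-1))
  - (ip_mu mu V P - sqnorm mu) *: (Q - const_mx (T%:R^-1)).
Proof.
move=> hpos hs hP hQ hA hPmu hVmu.
apply/matrixP => t k; rewrite Edata_entry.
rewrite (eq_bigr (fun s => (mu k 0)^-1 * \sum_t' ((1%:M - const_mx (T%:R^-1) : 'M[R]_T) t t' *
   (prob mu P Q s * gradA V A s t' k)))); last first.
  move=> s _; rewrite /pgradA !mxE mulrCA mulr_sumr; congr (_ * _).
  by apply: eq_bigr => t' _; rewrite !mxE; ring.
rewrite -mulr_sumr exchange_big /=.
under eq_bigr => t' _ do rewrite -mulr_sumr EA_full //.
have hmu : mu k 0 != 0 by rewrite gt_eqF.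
rewrite (eq_bigr (fun t' => ((t == t')%:R - T%:R^-1) * ((nrm_mu mu V - sqnorm mu) * A t' k - (ip_mu mu V P - sqnorm mu) * Q t' k) * mu k 0)); last first.
  by move=> t' _; rewrite !mxE; ring.
rewrite -mulr_suml mulrCA mulVf // mulr1.
set a1 := nrm_mu mu V - sqnorm mu; set a2 := ip_mu mu V P - sqnorm mu.
rewrite (eq_bigr (fun i => (t == i)%:R * (a1 * A i k - a2 * Q i k) - T%:R^-1 * (a1 * A i k - a2 * Q i k))); last first.
  by move=> i _; ring.
rewrite sumrB sum_delta -mulr_sumr sumrB -!mulr_sumr hA hQ !mxE; ring.
Qed.

Lemma Edata_mul (R : realType) N T m n p q (mu : 'cV[R]_N) (P : 'M[R]_N) (Q : 'M[R]_(T, N))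
  (L : 'M[R]_(m, n)) (f : sample N T -> 'M[R]_(n, p)) (R' : 'M[R]_(p, q)) :
  Edata mu P Q (fun s => L *m f s *m R') = L *m Edata mu P Q f *m R'.
Proof.
rewrite /Edata mulmx_sumr mulmx_suml; apply: eq_bigr => s _.
by rewrite -scalemxAr -scalemxAl.
Qed.

Lemma ones_mu (R : realType) N (mu : 'cV[R]_N) :
  \sum_i mu i 0 = 1 -> onesr R N *m mu = 1%:M.
Proof.
move=> hs; apply/matrixP => a b; rewrite (ord1 a) (ord1 b) !mxE /= -hs.
by apply: eq_bigr => i _; rewrite mxE mul1r.
Qed.

Lemma M_entry (R : realType) N (mu : 'cV[R]_N) i j : (mu *m onesr R N) i j = mu i 0.
Proof. by rewrite mxE big_ord1 mxE mulr1. Qed.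

Lemma proj_id (R : realType) N (mu : 'cV[R]_N) (Y : 'M[R]_N) :
  onesr R N *m Y = 0 -> Y *m mu = 0 ->
  (1%:M - const_mx (N%:R^-1)) *m Y *m (1%:M - (sqnorm mu)^-1 *: (mu *m mu^T)) = Y.
Proof.
move=> h1 h2.
have hc : (const_mx (N%:R^-1) : 'M[R]_N) *m Y = 0.
  apply/matrixP => i j; rewrite !mxE.
  have := congr1 (fun X : 'rV[R]_N => X 0 j) h1; rewrite !mxE => h1'.
  rewrite (eq_bigr (fun a => N%:R^-1 * Y a j)); last by move=> a _; rewrite mxE.
  rewrite -mulr_sumr (eq_bigr (fun a => onesr R N 0 a * Y a j)) ?h1' ?mulr0 //.
  by move=> a _; rewrite mxE mul1r.
rewrite mulmxBl mul1mx hc subr0 mulmxBr mulmx1 -scalemxAr mulmxA h2 mul0mx scaler0 subr0.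
by [].
Qed.

Lemma EgV_eq (R : realType) N T (mu : 'cV[R]_N) (P V : 'M[R]_N) (Q A : 'M[R]_(T, N)) :
  (forall i, 0 < mu i 0) -> \sum_i mu i 0 = 1 ->
  (forall a, \sum_o P o a = 1) -> (forall k, \sum_t Q t k = 1) -> (forall k, \sum_t A t k = 1) ->
  onesr R N *m P = onesr R N -> onesr R N *m V = onesr R N ->
  P *m mu = mu -> V *m mu = mu ->
  Edata mu P Q (pgradV mu V A) =
  nrm_mu mu A *: (V - mu *m onesr R N) - ip_mu mu A Q *: (P - mu *m onesr R N).
Proof.
move=> hpos hs hP hQ hA hP1 hV1 hPmu hVmu.
set Y := nrm_mu mu A *: (V - mu *m onesr R N) - ip_mu mu A Q *: (P - mu *m onesr R N).
have hEG : Edata mu P Q (gradV V A) *m diag_mx (\row_i (mu i 0)^-1) = Y.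
  apply/matrixP => i j; rewrite mul_mx_diag !mxE Edata_entry EV_full //.
  rewrite big_ord1 !mxE mulr1.
  have hmu : mu j 0 != 0 by rewrite gt_eqF.
  by field.
rewrite /pgradV.
rewrite (_ : (fun s => _) = (fun s => (1%:M - const_mx (N%:R^-1)) *m gradV V A s *m
   (diag_mx (\row_i (mu i 0)^-1) *m (1%:M - (sqnorm mu)^-1 *: (mu *m mu^T))))); last first.
  by apply/funext => s; rewrite !mulmxA.
rewrite Edata_mul -mulmxA [X in _ *m X]mulmxA hEG mulmxA proj_id //.
  rewrite /Y mulmxBr -!scalemxAr !mulmxBr !mulmxA ones_mu // !mul1mx hP1 hV1.
  by rewrite !subrr !scaler0 subrr.
rewrite /Y mulmxBl -!scalemxAl !mulmxBl -!mulmxA ones_mu // !mulmx1 hPmu hVmu.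
by rewrite !subrr !scaler0 subrr.
Qed.



Definition Dgen (R : realType) m n (mu : 'cV[R]_n) (B Z : 'M[R]_(m, n)) (z : R) (Y : 'M[R]_(m, n)) :=
  Y - ((ip_mu mu Y B - z) / (nrm_mu mu B - z)) *: B
    - (1 - (ip_mu mu Y B - z) / (nrm_mu mu B - z)) *: Z.

Lemma gen_step (R : realType) m n (mu : 'cV[R]_n) (X B Z h : 'M[R]_(m, n)) (z eta kap c : R) :
  ip_mu mu X Z = z -> ip_mu mu B Z = z -> ip_mu mu Z Z = z -> ip_mu mu h Z = 0 ->
  nrm_mu mu B - z != 0 ->
  nrm_mu mu (Dgen mu B Z z (X - eta *: (kap *: (X - Z) - c *: (B - Z) + h))) =
  (1 - eta * kap) ^+ 2 * nrm_mu mu (Dgen mu B Z z X)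
  - 2 * eta * (1 - eta * kap) * ip_mu mu (Dgen mu B Z z X) h
  - eta ^+ 2 / (nrm_mu mu B - z) * (ip_mu mu h B) ^+ 2 + eta ^+ 2 * nrm_mu mu h.
Proof.
move=> hXZ hBZ hZZ hhZ hK.
rewrite /Dgen /nrm_mu.
rewrite !(ipDl, ipDr, ipNl, ipNr, ipZl, ipZr).
rewrite !(ipC mu Z) hXZ hBZ hZZ hhZ.
rewrite !(ipC mu B X) !(ipC mu h X) !(ipC mu h B).
move: hK; set K := nrm_mu mu B - z => hK.
have hB : ip_mu mu B B = K + z by rewrite /K; ring.
rewrite hB.
field. all: exact hK.
Qed.

Lemma gen_norm (R : realType) m n (mu : 'cV[R]_n) (X B Z : 'M[R]_(m, n)) (z : R) :
  ip_mu mu X Z = z -> ip_mu mu B Z = z -> ip_mu mu Z Z = z ->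
  nrm_mu mu B - z != 0 ->
  nrm_mu mu X = (nrm_mu mu B - z) * ((ip_mu mu X B - z) / (nrm_mu mu B - z)) ^+ 2 + z
     + nrm_mu mu (Dgen mu B Z z X).
Proof.
move=> hXZ hBZ hZZ hK.
rewrite /Dgen /nrm_mu.
rewrite !(ipDl, ipDr, ipNl, ipNr, ipZl, ipZr).
rewrite !(ipC mu Z) hXZ hBZ hZZ.
rewrite !(ipC mu B X).
move: hK; set K := nrm_mu mu B - z => hK.
have hB : ip_mu mu B B = K + z by rewrite /K; ring.
rewrite hB.
field. all: exact hK.
Qed.

Lemma ipJ (R : realType) m n (mu : 'cV[R]_n) (X : 'M[R]_(m, n)) (c : R) :
  ip_mu mu X (const_mx c) = c * \sum_k mu k 0 * \sum_t X t k.
Proof.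
rewrite ip_sum exchange_big /= mulr_sumr; apply: eq_bigr => k _.
rewrite !mulr_sumr; apply: eq_bigr => t _; rewrite mxE; ring.
Qed.

Lemma ipM (R : realType) m n (mu : 'cV[R]_n) (X : 'M[R]_(m, n)) (nu : 'cV[R]_m) :
  ip_mu mu X (nu *m onesr R n) = \sum_i nu i 0 * (X *m mu) i 0.
Proof.
rewrite ip_sum; apply: eq_bigr => i _; rewrite mxE mulr_sumr; apply: eq_bigr => k _.
rewrite [(nu *m _) i k]mxE big_ord1 [onesr _ _ _ _]mxE; ring.
Qed.

Lemma colsum (R : realType) m n (X : 'M[R]_(m, n)) (v : 'rV[R]_n) :
  onesr R m *m X = v -> forall k, \sum_t X t k = v 0 k.
Proof.
move=> h k; rewrite -h mxE; apply: eq_bigr => t _; by rewrite mxE mul1r.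
Qed.

Lemma sq_pos (R : realType) N (mu : 'cV[R]_N) (P : 'M[R]_N) :
  (forall i, 0 < mu i 0) -> 0 < K_P mu P -> 0 < sqnorm mu.
Proof.
case: N mu P => [|n] mu P hpos hK.
  by move: hK; rewrite /K_P /nrm_mu ip_sum /sqnorm !big_ord0 subrr ltxx.
rewrite /sqnorm (bigD1 ord0) //=.
have h1 : 0 < mu ord0 0 ^+ 2 by rewrite exprn_gt0.
have h2 : 0 <= \sum_(i | i != ord0) mu i 0 ^+ 2 by apply: sumr_ge0 => i _; rewrite sqr_ge0.
lra.
Qed.

Lemma T_pos (R : realType) N T (mu : 'cV[R]_N) (Q : 'M[R]_(T, N)) :
  0 < K_Q mu Q -> (T%:R : R) != 0.
Proof.
case: T Q => [|T] Q hK; last by rewrite pnatr_eq0.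
by move: hK; rewrite /K_Q /nrm_mu ip_sum big_ord0 invr0 subrr ltxx.
Qed.

Lemma pgradA_ones (R : realType) N T (mu : 'cV[R]_N) (V : 'M[R]_N) (A : 'M[R]_(T, N)) s :
  (T%:R : R) != 0 -> onesr R T *m pgradA mu V A s = 0.
Proof.
move=> hT; apply/matrixP => i k; rewrite (ord1 i) !mxE.
transitivity ((mu k 0)^-1 * \sum_t' (\sum_t ((t == t')%:R - T%:R^-1)) * gradA V A s t' k).
  rewrite mulr_sumr; under eq_bigr do rewrite mxE mul1r !mxE mulr_sumr.
  rewrite exchange_big /=; apply: eq_bigr => t' _.
  rewrite mulr_suml mulr_sumr; apply: eq_bigr => t _; rewrite !mxE; ring.
rewrite big1 ?mulr0 // => t' _.
rewrite sumrB (eq_bigr (fun t => (t' == t)%:R * 1)); last by move=> t _; rewrite eq_sym mulr1.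
by rewrite sum_delta sumr_const card_ord -[_^-1 *+ T]mulr_natr mulVf // subrr mul0r.
Qed.

Lemma proj_mu (R : realType) N (mu : 'cV[R]_N) :
  sqnorm mu != 0 -> (1%:M - (sqnorm mu)^-1 *: (mu *m mu^T)) *m mu = 0.
Proof.
move=> hs.
have h : mu^T *m mu = (sqnorm mu)%:M.
  apply/matrixP => a b; rewrite (ord1 a) (ord1 b) !mxE /= /sqnorm mulr1n.
  by apply: eq_bigr => i _; rewrite mxE expr2.
rewrite mulmxBl mul1mx -scalemxAl -mulmxA h mul_mx_scalar scalerA mulVf // scale1r subrr //.
Qed.

Lemma pgradV_mu (R : realType) N T (mu : 'cV[R]_N) (V : 'M[R]_N) (A : 'M[R]_(T, N)) s :
  sqnorm mu != 0 -> pgradV mu V A s *m mu = 0.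
Proof. move=> hs; rewrite /pgradV; set X := (_ *m _ *m diag_mx _); by rewrite -mulmxA proj_mu // mulmx0.
Qed.


Unset Implicit Arguments. Set Strict Implicit.


Theorem lemmaC6 (R : realType) (N T B : nat)
  (mu : 'cV[R]_N) (P : 'M[R]_N) (Q : 'M[R]_(T, N))
  (V : 'M[R]_N) (A : 'M[R]_(T, N)) (etaV etaA : R)
  (S : 'I_B -> sample N T) :
  (forall i, 0 < mu i 0) -> \sum_i mu i 0 = 1 ->
  (forall i j, 0 <= P i j) -> onesr R N *m P = onesr R N -> P *m mu = mu ->
  (forall t k, 0 <= Q t k) -> onesr R T *m Q = onesr R N ->
  0 < K_P mu P -> 0 < K_Q mu Q ->
  onesr R N *m V = onesr R N -> onesr R T *m A = onesr R N -> V *m mu = mu ->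
  (0 < B)%N ->
  let EgV := Edata mu P Q (pgradV mu V A) in
  let EgA := Edata mu P Q (pgradA mu V A) in
  let hV := batch_avg S (pgradV mu V A) - EgV in
  let hA := batch_avg S (pgradA mu V A) - EgA in
  let V' := V - etaV *: (EgV + hV) in
  let A' := A - etaA *: (EgA + hA) in
  let aV := alphaV mu P V in
  let aA := alphaA mu Q A in
  let DV := DeltaV mu P V in
  let DA := DeltaA mu Q A in
  let cA := 1 - etaA * K_P mu P * aV ^+ 2 - etaA * nrm_mu mu DV in
  let cV := 1 - etaV * (aA ^+ 2 * K_Q mu Q + T%:R^-1) - etaV * nrm_mu mu DA in
  nrm_mu mu (DeltaA mu Q A') =
    cA ^+ 2 * nrm_mu mu DA - 2 * etaA * cA * ip_mu mu DA hA
    - etaA ^+ 2 / K_Q mu Q * (ip_mu mu hA Q) ^+ 2 + etaA ^+ 2 * nrm_mu mu hA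
  /\
  nrm_mu mu (DeltaV mu P V') =
    cV ^+ 2 * nrm_mu mu DV - 2 * etaV * cV * ip_mu mu DV hV
    - etaV ^+ 2 / K_P mu P * (ip_mu mu P hV) ^+ 2 + etaV ^+ 2 * nrm_mu mu hV.
Proof.
move=> hmu hs hP0 hP1 hPmu hQ0 hQ1 hKP hKQ hV1 hA1 hVmu hB.
move=> EgV EgA hV hA V' A' aV aA DV DA cA cV.
have hPc : forall a, \sum_o P o a = 1 by move=> a; rewrite (colsum hP1) mxE.
have hQc : forall a, \sum_o Q o a = 1 by move=> a; rewrite (colsum hQ1) mxE.
have hAc : forall a, \sum_o A o a = 1 by move=> a; rewrite (colsum hA1) mxE.
have hT := T_pos hKQ.
have hsq : sqnorm mu != 0 by rewrite gt_eqF // (sq_pos hmu hKP).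
have eA : EgA = (nrm_mu mu V - sqnorm mu) *: (A - const_mx (T%:R^-1))
  - (ip_mu mu V P - sqnorm mu) *: (Q - const_mx (T%:R^-1)) by exact: EgA_eq.
have eV : EgV = nrm_mu mu A *: (V - mu *m onesr R N) - ip_mu mu A Q *: (P - mu *m onesr R N)
  by exact: EgV_eq.
have hA0 : onesr R T *m hA = 0.
  rewrite /hA /EgA /batch_avg /Edata mulmxBr -scalemxAr !mulmx_sumr.
  rewrite big1 ?scaler0 ?sub0r; last by move=> b _; rewrite pgradA_ones.
  by rewrite big1 ?oppr0 // => s _; rewrite -scalemxAr pgradA_ones // scaler0.
have hV0 : hV *m mu = 0.
  rewrite /hV /EgV /batch_avg /Edata mulmxBl -scalemxAl !mulmx_suml.
  rewrite big1 ?scaler0 ?sub0r; last by move=> b _; rewrite pgradV_mu.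
  by rewrite big1 ?oppr0 // => s _; rewrite -scalemxAl pgradV_mu // scaler0.
set J : 'M[R]_(T, N) := const_mx (T%:R^-1).
set M : 'M[R]_N := mu *m onesr R N.
have hAJ : ip_mu mu A J = T%:R^-1 by rewrite /J ipJ (eq_bigr (fun k => mu k 0)) ?hs ?mulr1 // => k _; rewrite hAc mulr1.
have hQJ : ip_mu mu Q J = T%:R^-1 by rewrite /J ipJ (eq_bigr (fun k => mu k 0)) ?hs ?mulr1 // => k _; rewrite hQc mulr1.
have hJJ : ip_mu mu J J = T%:R^-1.
  rewrite /J ipJ (eq_bigr (fun k => mu k 0 * (T%:R * T%:R^-1))); last first.
    move=> k _; under eq_bigr do rewrite mxE. by rewrite sumr_const card_ord -[_ *+ T]mulr_natr mulVf // divff.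
  by rewrite -mulr_suml hs mul1r divff // mulr1.
have hhJ : ip_mu mu hA J = 0.
  rewrite /J ipJ big1 ?mulr0 // => k _.
  by rewrite (colsum hA0) mxE mulr0.
have hVM : ip_mu mu V M = sqnorm mu.
  by rewrite /M ipM /sqnorm; apply: eq_bigr => i _; rewrite hVmu expr2.
have hPM : ip_mu mu P M = sqnorm mu.
  by rewrite /M ipM /sqnorm; apply: eq_bigr => i _; rewrite hPmu expr2.
have hMM : ip_mu mu M M = sqnorm mu.
  rewrite /M ipM /sqnorm; apply: eq_bigr => i _; rewrite -mulmxA ones_mu // mulmx1 expr2 //.
have hhM : ip_mu mu hV M = 0.
  by rewrite /M ipM big1 // => i _; rewrite hV0 mxE mulr0.
have hKQ0 : nrm_mu mu Q - T%:R^-1 != 0 by move: hKQ; rewrite /K_Q => /gt_eqF ->.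
have hKP0 : nrm_mu mu P - sqnorm mu != 0 by move: hKP; rewrite /K_P => /gt_eqF ->.
have nV := gen_norm hVM hPM hMM hKP0.
have nA := gen_norm hAJ hQJ hJJ hKQ0.
split.
  have -> : DeltaA mu Q A' = Dgen mu Q J (T%:R^-1)
     (A - etaA *: ((nrm_mu mu V - sqnorm mu) *: (A - J) - (ip_mu mu V P - sqnorm mu) *: (Q - J) + hA)).
    by rewrite /A' eA.
  rewrite gen_step //.
  have hDV : DV = Dgen mu P M (sqnorm mu) V by [].
  have hcA : cA = 1 - etaA * (nrm_mu mu V - sqnorm mu).
    rewrite /cA hDV /aV /alphaV /K_P nV; ring.
  by rewrite hcA.
have -> : DeltaV mu P V' = Dgen mu P M (sqnorm mu)
   (V - etaV *: (nrm_mu mu A *: (V - M) - ip_mu mu A Q *: (P - M) + hV)).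
  by rewrite /V' eV.
rewrite gen_step //.
have hDA : DA = Dgen mu Q J (T%:R^-1) A by [].
have hcV : cV = 1 - etaV * nrm_mu mu A.
  rewrite /cV hDA /aA /alphaA /K_Q nA; ring.
by rewrite hcV (ipC mu P hV).
Qed.
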